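(* For every $(g,n)\in Q\rtimes\mathbb{Z}$ we have $\det\bigl((g,n);\tau_q\bigr)=q^{-n}$.
   Context: All representations are over $\overline{\mathbb{Q}}_\ell$, $\ell$ an odd prime. Let $q=2^f$ with $f\ge1$. Let $Q\subset \mathit{GL}_3(\mathbb{F}_4)$ be the group of matrices $g(\alpha,\beta,\gamma)=\begin{pmatrix}\alpha&\beta&\gamma\\0&\alpha^2&\beta^2\\0&0&\alpha\end{pmatrix}$ with $\alpha\in\mathbb{F}_4^\times$, $\beta,\gamma\in\mathbb{F}_4$, $\alpha\gamma^2+\alpha^2\gamma=\beta^3$. Let $Q\rtimes\mathbb{Z}$ be the semidirect product where $r\in\mathbb{Z}$ acts by $g(\alpha,\beta,\gamma)\mapsto g(\alpha^{q^r},\beta^{q^r},\gamma^{q^r})$. Fix $\bar\zeta_3\in\mathbb{F}_4\setminus\mathbb{F}_2$. Let $Q_8=\{g(1,\beta,\gamma)\in Q\}$; $C_4\subset Q_8$ the cyclic subgroup of order 4 generated by $g(1,1,\bar\zeta_3)$; $Z=\{g(1,0,0),g(1,0,1)\}$; $C_3=\{g(\alpha,0,0)\}$; $C_6=Z\times C_3$. Fix a faithful character $\phi$ of $C_4$; let $\tau$ be the unique irreducible two-dimensional representation of $Q$ with $\tau|_Z\simeq(\phi|_Z)^{\oplus2}$ and $\operatorname{Tr}\tau(g(\alpha,0,0))=-1$ for $\alpha\in\mathbb{F}_4\setminus\mathbb{F}_2$. Fix $(-2)^{1/2}\in\overline{\mathbb{Q}}_\ell$, with $(-2)^{m/2}=((-2)^{1/2})^m$.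 The representation $\tau_q$ of $Q\rtimes\mathbb{Z}$ is defined as follows. If $f$ is even, $Q\rtimes\mathbb{Z}=Q\times\mathbb{Z}$ and $\tau_q$ is the representation with $\tau_q|_Q\simeq\tau$ and $(g(1,0,0),1)$ acting by the scalar $(-2)^{-f/2}$. If $f$ is odd: let $C\subset Q_8\rtimes\mathbb{Z}$ be the subgroup of $(g,n)$ with $g\in C_4$ if $n$ even and $g\in Q_8\setminus C_4$ if $n$ odd; fix $\eta$ with $\eta^2+(-2)^{(f+1)/2}\eta+q=0$; let $\phi_1$ be the character of $C$ with $\phi_1((g(1,\bar\zeta_3,\bar\zeta_3),1))=\eta q^{-1}$, $\phi_1((g(1,0,0),2))=-q^{-1}$; let $\phi_2$ be the character of $C_6\rtimes\mathbb{Z}$ with $\phi_2|_{C_6}=\phi|_Z\otimes1_{C_3}$ and $\phi_2((g(1,0,0),1))=(-2)^{f/2}q^{-1}$; there is a surjective $Q\rtimes\mathbb{Z}$-homomorphism $\Psi\colon\operatorname{Ind}_C^{Q\rtimes\mathbb{Z}}\phi_1\to\operatorname{Ind}_{C_6\rtimes\mathbb{Z}}^{Q\rtimes\mathbb{Z}}\phi_2$, unique up to scalar, and $\tau_q:=\ker\Psi$ (two-dimensional). *)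

(* Defs.v *)
From HB Require Import structures.
From mathcomp Require Import all_boot all_order all_algebra all_field.
Set Implicit Arguments. Unset Strict Implicit. Unset Printing Implicit Defensive.
Import Order.TTheory GRing.Theory Num.Theory.
Local Open Scope ring_scope.

(* The finite field F_4 is taken to be an arbitrary finite field F4 with     *)
(* #|F4| = 4 (unique up to isomorphism).  Representations are over an        *)
(* arbitrary algebraically closed field F of characteristic 0 (this covers   *)
(* Qbar_ell).                                                                *)

Definition gm (F4 : finFieldType) (a b c : F4) : 'M[F4]_3 :=
  \matrix_(i < 3, j < 3)
    nth 0 (nth [::] [:: [:: a; b; c]; [:: 0; a ^+ 2; b ^+ 2]; [:: 0; 0; a]] i) j.

Definition inQ (F4 : finFieldType) (A : 'M[F4]_3) : Prop :=
  exists a b c : F4, [/\ a != 0, a * c ^+ 2 + a ^+ 2 * c = b ^+ 3 & A = gm a b c].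

Definition inQ8 (F4 : finFieldType) (A : 'M[F4]_3) : Prop :=
  inQ A /\ exists b c : F4, A = gm 1 b c.

Definition inC4 (F4 : finFieldType) (zeta : F4) (A : 'M[F4]_3) : Prop :=
  exists k : nat, A = gm 1 1 zeta ^+ k.

Definition inZ (F4 : finFieldType) (A : 'M[F4]_3) : Prop :=
  A = gm 1 0 0 \/ A = gm 1 0 1.

Definition inC3 (F4 : finFieldType) (A : 'M[F4]_3) : Prop :=
  exists a : F4, a != 0 /\ A = gm a 0 0.

Definition inC6 (F4 : finFieldType) (A : 'M[F4]_3) : Prop :=
  exists z c, [/\ inZ z, inC3 c & A = z *m c].

(* The action of r in Z on F_4:  x |-> x^(q^r), q = 2^f.  For r < 0 this is
   the inverse of x |-> x^(q^|r|); since x^4 = x on F_4, the Frobenius of F_4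
   is an involution, so this inverse is again x |-> x^(2^(f|r|)). *)
Definition frob (F4 : finFieldType) (f : nat) (r : int) (x : F4) : F4 :=
  x ^+ (2 ^ (f * `|r|)%N).

Definition frobmx (F4 : finFieldType) (f : nat) (r : int) (A : 'M[F4]_3) :=
  map_mx (frob f r) A.

Definition inG (F4 : finFieldType) (x : 'M[F4]_3 * int) : Prop := inQ x.1.

Definition gmul (F4 : finFieldType) (f : nat) (x y : 'M[F4]_3 * int)
  : 'M[F4]_3 * int :=
  (x.1 *m frobmx f x.2 y.1, x.2 + y.2).

Definition gone (F4 : finFieldType) : 'M[F4]_3 * int := (1%:M, 0).

Definition is_character (T : Type) (R : fieldType) (H : T -> Prop)
    (mul : T -> T -> T) (chi : T -> R) : Prop :=
  (forall x, H x -> chi x != 0) /\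
  (forall x y, H x -> H y -> chi (mul x y) = chi x * chi y).

Definition faithful_char_C4 (F4 : finFieldType) (R : fieldType) (zeta : F4)
    (phi : 'M[F4]_3 -> R) : Prop :=
  is_character (R := R) (@inC4 F4 zeta) (@mulmx F4 3 3 3) phi /\
  (forall A B, inC4 zeta A -> inC4 zeta B -> phi A = phi B -> A = B).

Definition is_repQ (F4 : finFieldType) (R : fieldType) (d : nat)
    (rho : 'M[F4]_3 -> 'M[R]_d) : Prop :=
  rho 1%:M = 1%:M /\
  (forall A B, inQ A -> inQ B -> rho (A *m B) = rho A *m rho B).

Definition is_repG (F4 : finFieldType) (R : fieldType) (f d : nat)
    (rho : 'M[F4]_3 * int -> 'M[R]_d) : Prop :=
  rho (gone F4) = 1%:M /\
  (forall x y, inG x -> inG y -> rho (gmul f x y) = rho x *m rho y).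

Definition irreducibleQ (F4 : finFieldType) (R : fieldType) (d : nat)
    (rho : 'M[F4]_3 -> 'M[R]_d) : Prop :=
  (0 < d)%N /\
  forall U : 'M[R]_d, (forall A, inQ A -> (U *m rho A <= U)%MS) ->
    U = 0 \/ row_full U.

Definition is_tau (F4 : finFieldType) (R : fieldType)
    (phi : 'M[F4]_3 -> R) (tau : 'M[F4]_3 -> 'M[R]_2) : Prop :=
  [/\ is_repQ tau, irreducibleQ tau,
      (exists P : 'M[R]_2, P \in unitmx /\
         forall z, inZ z -> tau z = invmx P *m (phi z)%:M *m P)
    & forall a : F4, a != 0 -> a != 1 -> \tr (tau (gm a 0 0)) = -1].

(* tau_q for f even: tau_q|_Q ~ tau and (g(1,0,0),1) acts by (-2)^{-f/2},
   where (-2)^{m/2} := s^m for the fixed square root s of -2 *)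
Definition is_tau_q_even (F4 : finFieldType) (R : fieldType) (f : nat)
    (phi : 'M[F4]_3 -> R) (s : R) (rho : 'M[F4]_3 * int -> 'M[R]_2) : Prop :=
  [/\ is_repG f rho,
      exists tau, is_tau phi tau /\
        exists P : 'M[R]_2, P \in unitmx /\
          forall A, inQ A -> rho (A, 0) = invmx P *m tau A *m P
    & rho (gm 1 0 0, 1) = (s ^ (- (f%:Z)))%:M].

(* Ind_H^G chi realised as { v : G -> R | v(h x) = chi(h) v(x) }, G acting by
   right translation (x . v)(y) = v(y x); functions are required to vanish
   outside G. *)
Definition inInd (F4 : finFieldType) (R : fieldType) (f : nat)
    (H : 'M[F4]_3 * int -> Prop) (chi : 'M[F4]_3 * int -> R)
    (v : 'M[F4]_3 * int -> R) : Prop :=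
  (forall x, ~ inG x -> v x = 0) /\
  (forall h x, H h -> inG x -> v (gmul f h x) = chi h * v x).

Definition gact (F4 : finFieldType) (R : Type) (f : nat)
    (g : 'M[F4]_3 * int) (v : 'M[F4]_3 * int -> R) : 'M[F4]_3 * int -> R :=
  fun y => v (gmul f y g).

Definition inC (F4 : finFieldType) (zeta : F4) (x : 'M[F4]_3 * int) : Prop :=
  inQ8 x.1 /\ (if odd `|x.2|%N then ~ inC4 zeta x.1 else inC4 zeta x.1).

Definition inC6Z (F4 : finFieldType) (x : 'M[F4]_3 * int) : Prop := inC6 x.1.

Definition is_phi1 (F4 : finFieldType) (R : fieldType) (f : nat) (zeta : F4)
    (eta : R) (phi1 : 'M[F4]_3 * int -> R) : Prop :=
  let q : R := (2 ^ f)%:R in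
  [/\ is_character (inC zeta) (gmul f) phi1,
      phi1 (gm 1 zeta zeta, 1) = eta / q
    & phi1 (gm 1 0 0, 2) = - q^-1].

Definition is_phi2 (F4 : finFieldType) (R : fieldType) (f : nat)
    (phi : 'M[F4]_3 -> R) (s : R) (phi2 : 'M[F4]_3 * int -> R) : Prop :=
  let q : R := (2 ^ f)%:R in
  [/\ is_character (@inC6Z F4) (gmul f) phi2,
      (forall z c, inZ z -> inC3 c -> phi2 (z *m c, 0) = phi z)
    & phi2 (gm 1 0 0, 1) = s ^ (f%:Z) / q].

Definition is_Psi (F4 : finFieldType) (R : fieldType) (f : nat) (zeta : F4)
    (phi1 phi2 : 'M[F4]_3 * int -> R)
    (Psi : ('M[F4]_3 * int -> R) -> ('M[F4]_3 * int -> R)) : Prop :=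
  let I1 := inInd f (inC zeta) phi1 in
  let I2 := inInd f (@inC6Z F4) phi2 in
  [/\ forall v, I1 v -> I2 (Psi v),
      forall a v w, I1 v -> I1 w ->
        Psi (fun y => a * v y + w y) = (fun y => a * Psi v y + Psi w y),
      forall g v, inG g -> I1 v -> Psi (gact f g v) = gact f g (Psi v)
    & forall w, I2 w -> exists2 v, I1 v & Psi v = w].

(* tau_q := ker Psi ; b is a basis of ker Psi *)
Definition is_ker_basis (F4 : finFieldType) (R : fieldType) (f : nat)
    (zeta : F4) (phi1 : 'M[F4]_3 * int -> R)
    (Psi : ('M[F4]_3 * int -> R) -> ('M[F4]_3 * int -> R))
    (b : 'I_2 -> 'M[F4]_3 * int -> R) : Prop :=
  let K v := inInd f (inC zeta) phi1 v /\ Psi v = (fun _ => 0) in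
  [/\ forall i, K (b i),
      forall c : 'I_2 -> R, (fun y => \sum_i c i * b i y) = (fun _ => 0) ->
        forall i, c i = 0
    & forall v, K v -> exists c : 'I_2 -> R, v = (fun y => \sum_i c i * b i y)].

Definition is_action_matrix (F4 : finFieldType) (R : fieldType) (f : nat)
    (b : 'I_2 -> 'M[F4]_3 * int -> R) (g : 'M[F4]_3 * int) (M : 'M[R]_2)
    : Prop :=
  forall j, gact f g (b j) = (fun y => \sum_i M i j * b i y).

(* Main.v *)
Require Import Defs.
From HB Require Import structures.
From mathcomp Require Import all_boot all_order all_algebra all_field.
From Stdlib Require Import ClassicalEpsilon FunctionalExtensionality Classical_Prop.
From mathcomp Require Import ring zify.
Set Implicit Arguments. Unset Strict Implicit. Unset Printing Implicit Defensive.
Import GRing.Theory.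
Local Open Scope ring_scope.

Section F4.
Variable F4 : finFieldType.
Hypothesis card4 : #|F4| = 4%N.

Lemma x4 (x : F4) : x ^+ 4 = x.
Proof. by rewrite -{2}(expf_card x) card4. Qed.

Lemma x22 (x : F4) : x ^+ 2 ^+ 2 = x.
Proof. by rewrite -exprM x4. Qed.

Lemma two0 : (1 + 1 : F4) = 0.
Proof.
have := x4 (-1); rewrite -signr_odd /= expr0 => h.
by rewrite {1}h addNr.
Qed.

Lemma addxx (x : F4) : x + x = 0.
Proof. by rewrite -(mulr2n x) -mulr_natl -[2%:R]/(1 + 1 : F4) two0 mul0r. Qed.

Lemma oppF (x : F4) : - x = x.
Proof. by apply/eqP; rewrite eq_sym -subr_eq0 opprK addxx. Qed.

Lemma sqrD (x y : F4) : (x + y) ^+ 2 = x ^+ 2 + y ^+ 2.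
Proof. by rewrite sqrrD mulr2n addxx addr0. Qed.

Lemma cube (x : F4) : x != 0 -> x ^+ 3 = 1.
Proof.
move=> x0; apply: (mulfI x0); rewrite -exprS x4 mulr1 //.
Qed.

Lemma pchar2 : (2%N \in [pchar F4]).
Proof. by rewrite inE /= -[2%:R]/(1 + 1 : F4) two0 eqxx. Qed.

Variable zeta : F4.
Hypotheses (zeta0 : zeta != 0) (zeta1 : zeta != 1).

Lemma z3 : zeta ^+ 3 = 1. Proof. exact: cube. Qed.

Lemma z2 : zeta ^+ 2 = zeta + 1.
Proof.
have h : (zeta - 1) * (zeta ^+ 2 + zeta + 1) = 0.
  have -> : (zeta - 1) * (zeta ^+ 2 + zeta + 1) = zeta ^+ 3 - 1 by ring.
  by rewrite z3 subrr.
move/eqP: h; rewrite mulf_eq0 subr_eq0 (negbTE zeta1) /= => /eqP h.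
have e : zeta^+2 = zeta^+2 + zeta + 1 - (zeta + 1) by ring.
by rewrite e h sub0r oppF.
Qed.

Lemma enumF (x : F4) : [\/ x = 0, x = 1, x = zeta | x = zeta ^+ 2].
Proof.
have z20 : zeta ^+ 2 != 0 by rewrite expf_neq0.
have zz2 : zeta != zeta ^+ 2.
  apply/eqP=> h; move/eqP: zeta1; apply; apply: (mulfI zeta0).
  by rewrite mulr1 -expr2.
have z21 : zeta ^+ 2 != 1.
  apply/eqP=> h; move/eqP: zeta1; apply.
  by rewrite -[zeta]mul1r -h -exprSr z3.
case: (x =P 0) => [->|h0]; first by constructor.
case: (x =P 1) => [->|h1]; first by constructor.
case: (x =P zeta) => [->|h2]; first by constructor.
case: (x =P zeta ^+ 2) => [->|h3]; first by constructor.
have u : uniq [:: 0; 1; zeta; zeta ^+ 2; x].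
  rewrite /= !inE !negb_or.
  have g0 : 0 != x by apply/eqP=> /esym.
  have g1 : 1 != x by apply/eqP=> /esym.
  have g2 : zeta != x by apply/eqP=> /esym.
  have g3 : zeta ^+ 2 != x by apply/eqP=> /esym.
  by rewrite g0 g1 g2 g3 zz2 !(eq_sym 0) oner_eq0 zeta0 z20 !(eq_sym 1) zeta1 z21.
have := max_card (mem [:: 0; 1; zeta; zeta ^+ 2; x]).
by rewrite card4 (card_uniqP u).
Qed.



End F4.

Section GM.
Variable F4 : finFieldType.
Hypothesis card4 : #|F4| = 4%N.

Lemma gm1 : gm (1 : F4) 0 0 = 1%:M.
Proof.
apply/matrixP => i j; rewrite !mxE.
case: i j => [[|[|[|?]]] ?] [[|[|[|?]]] ?] //=; rewrite ?expr1n ?expr0n //=.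


Qed.

Lemma gm_mul (a b c a' b' c' : F4) :
  gm a b c *m gm a' b' c' =
  gm (a * a') (a * b' + b * a' ^+ 2) (a * c' + b * b' ^+ 2 + c * a').
Proof.
apply/matrixP => i j; rewrite !mxE !big_ord_recl big_ord0 !mxE.
case: i j => [[|[|[|?]]] ?] [[|[|[|?]]] ?] //=; rewrite ?mul0r ?mulr0 ?add0r ?addr0 //.
all: try ring.
by rewrite sqrD // !exprMn -exprD x4.
Qed.
End GM.

Lemma oddz (r s : int) : odd (absz (r + s)) = odd (absz r) (+) odd (absz s).
Proof.
rewrite -[odd (absz (r+s))]negbK -[odd (absz r)]negbK -[odd (absz s)]negbK.
rewrite -!eqb0 -!(modn2).
case: eqP; case: eqP; case: eqP => /= *; lia.
Qed.

Section Frob.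
Variable F4 : finFieldType.
Hypothesis card4 : #|F4| = 4%N.
Variable f : nat.

Lemma frob2k k (x : F4) : x ^+ (2 ^ k) = if odd k then x ^+ 2 else x.
Proof.
elim: k => [|k IH]; first by rewrite expr1.
rewrite expnS mulnC exprM IH /=; case: (odd k) => //=.
by rewrite -exprM x4.
Qed.

Lemma frobE r (x : F4) : frob f r x = if odd (f * absz r) then x ^+ 2 else x.
Proof. by rewrite /frob frob2k. Qed.

Definition sqF : {rmorphism F4 -> F4} := pFrobenius_aut (pchar2 card4).

Lemma sqFE x : sqF x = x ^+ 2. Proof. by []. Qed.

Lemma frobmxE r (A : 'M[F4]_3) :
  frobmx f r A = if odd (f * absz r) then map_mx sqF A else A.
Proof.
apply/matrixP => i j; rewrite /frobmx; case: ifP => h; rewrite !mxE frobE h //.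
Qed.

Lemma frobmxM r (A B : 'M[F4]_3) :
  frobmx f r (A *m B) = frobmx f r A *m frobmx f r B.
Proof. by rewrite !frobmxE; case: ifP => //; rewrite map_mxM. Qed.

Lemma frobmx1 r : frobmx f r (1%:M : 'M[F4]_3) = 1%:M.
Proof. by rewrite !frobmxE; case: ifP => //; rewrite map_mx1. Qed.

Lemma sqFK (A : 'M[F4]_3) : map_mx sqF (map_mx sqF A) = A.
Proof. by apply/matrixP => i j; rewrite !mxE !sqFE -exprM x4. Qed.

Lemma frobmxD r s (A : 'M[F4]_3) :
  frobmx f r (frobmx f s A) = frobmx f (r + s) A.
Proof.
rewrite !frobmxE !oddM oddz.
by case: (odd f); case: (odd (absz r)); case: (odd (absz s)); rewrite /= ?sqFK.
Qed.

Lemma frobmx0 (A : 'M[F4]_3) : frobmx f 0 A = A.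
Proof. by rewrite frobmxE muln0. Qed.

Lemma frobmxK r (A : 'M[F4]_3) : frobmx f r (frobmx f r A) = A.
Proof.
rewrite !frobmxE oddM.
by case: (odd f); case: (odd (absz r)); rewrite /= ?sqFK.
Qed.

Lemma frob0 r : frob f r (0 : F4) = 0.
Proof. by rewrite frobE; case: ifP => //; rewrite expr0n. Qed.

Lemma frobmx_gm r (a b c : F4) :
  frobmx f r (gm a b c) = gm (frob f r a) (frob f r b) (frob f r c).
Proof.
apply/matrixP => i j; rewrite !mxE.
case: i j => [[|[|[|?]]] ?] [[|[|[|?]]] ?] //=; rewrite ?frob0 //.
all: by rewrite /frob -!exprM mulnC.
Qed.

Lemma gmul_assoc (x y z : 'M[F4]_3 * int) :
  gmul f (gmul f x y) z = gmul f x (gmul f y z).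
Proof.
rewrite /gmul /=; congr (_, _); last by rewrite addrA.
by rewrite frobmxM frobmxD mulmxA.
Qed.

Lemma gmul1 (x : 'M[F4]_3 * int) : gmul f x (gone F4) = x.
Proof. by case: x => A n; rewrite /gmul /gone /= frobmx1 mulmx1 addr0. Qed.

Lemma gmul0 (A B : 'M[F4]_3) : gmul f (A, 0) (B, 0) = (A *m B, 0).
Proof. by rewrite /gmul /= frobmx0 addr0. Qed.

Lemma gmul_dec (A : 'M[F4]_3) n : gmul f (A, 0) (1%:M, n) = (A, n).
Proof. by rewrite /gmul /= frobmx0 mulmx1 add0r. Qed.

Lemma gmul1n m n : gmul f ((1%:M : 'M[F4]_3), m) (1%:M, n) = (1%:M, m + n).
Proof. by rewrite /gmul /= frobmx1 mulmx1. Qed.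

End Frob.

Section QM.
Variable F4 : finFieldType.
Hypothesis card4 : #|F4| = 4%N.

Definition Qc (a b c : F4) := a != 0 /\ a * c ^+ 2 + a ^+ 2 * c = b ^+ 3.

Lemma inQP (A : 'M[F4]_3) : inQ A <-> exists a b c, Qc a b c /\ A = gm a b c.
Proof.
split; first by case=> a [b [c [h1 h2 h3]]]; exists a, b, c.
by case=> a [b [c [[h1 h2] h3]]]; exists a, b, c.
Qed.

Lemma three1 : (1 + 1 + 1 : F4) = 1.
Proof. by rewrite two0 // add0r. Qed.

Lemma Qc_mul a b c a' b' c' : Qc a b c -> Qc a' b' c' ->
  Qc (a * a') (a * b' + b * a' ^+ 2) (a * c' + b * b' ^+ 2 + c * a').
Proof.
move=> [a0 h1] [a'0 h2]; split; first by rewrite mulf_neq0.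
have eC2 : (a * c' + b * b' ^+ 2 + c * a') ^+ 2 =
    a ^+ 2 * c' ^+ 2 + b ^+ 2 * b' + c ^+ 2 * a' ^+ 2.
  by rewrite !sqrD // !exprMn -exprD x4.
rewrite exprMn eC2.
have -> : a * a' * (a ^+ 2 * c' ^+ 2 + b ^+ 2 * b' + c ^+ 2 * a' ^+ 2) +
   a ^+ 2 * a' ^+ 2 * (a * c' + b * b' ^+ 2 + c * a') =
   a ^+ 3 * (a' * c' ^+ 2 + a' ^+ 2 * c') + a' ^+ 3 * (a * c ^+ 2 + a ^+ 2 * c)
   + (a * a' * b ^+ 2 * b' + a ^+ 2 * a' ^+ 2 * b * b' ^+ 2) by ring.
rewrite h1 h2 (cube card4 a0) (cube card4 a'0) !mul1r.
have -> : (a * b' + b * a' ^+ 2) ^+ 3 =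
  a ^+ 3 * b' ^+ 3 + (1 + 1 + 1) * (a ^+ 2 * b' ^+ 2 * b * a' ^+ 2)
  + (1 + 1 + 1) * (a * b' * b ^+ 2 * a' ^+ 4) + b ^+ 3 * (a' ^+ 3) ^+ 2 by ring.
rewrite three1 x4 // (cube card4 a0) (cube card4 a'0) expr1n !mul1r mulr1; ring.
Qed.

Lemma Q_mul (A B : 'M[F4]_3) : inQ A -> inQ B -> inQ (A *m B).
Proof.
move=> /inQP [a [b [c [h ->]]]] /inQP [a' [b' [c' [h' ->]]]].
by apply/inQP; rewrite gm_mul //; do 3 eexists; split; last reflexivity; exact: Qc_mul.
Qed.

Definition ginv (a b c : F4) := gm (a ^+ 2) b (a * c + a ^+ 2 * b ^+ 3).

Lemma ginvP a b c : Qc a b c -> gm a b c *m ginv a b c = 1%:M.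
Proof.
move=> [a0 h]; rewrite /ginv gm_mul // -gm1.
rewrite -exprS (cube card4 a0) x22 // mulrC addxx //.
have -> : a * (a * c + a ^+ 2 * b ^+ 3) + b * b ^+ 2 + c * a ^+ 2
   = a ^+ 3 * b ^+ 3 + b ^+ 3 + (a ^+ 2 * c + a ^+ 2 * c) by ring.
by rewrite (cube card4 a0) mul1r !addxx // addr0.
Qed.

Lemma Qc_inv a b c : Qc a b c -> Qc (a ^+ 2) b (a * c + a ^+ 2 * b ^+ 3).
Proof.
move=> [a0 h]; split; first by rewrite expf_neq0.
rewrite sqrD //.
have -> : a ^+ 2 * ((a * c) ^+ 2 + (a ^+ 2 * b ^+ 3) ^+ 2) +
    (a ^+ 2) ^+ 2 * (a * c + a ^+ 2 * b ^+ 3) =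
    a ^+ 4 * (c ^+ 2 + a * c) + a ^+ 3 * (a ^+ 3 * b ^+ 6 + a ^+ 3 * b ^+ 3) by ring.
rewrite x4 // (cube card4 a0) !mul1r.
have -> : a * (c ^+ 2 + a * c) = a * c ^+ 2 + a ^+ 2 * c by ring.
rewrite h.
have -> : b ^+ 6 = b ^+ 4 * b ^+ 2 by rewrite -exprD.
by rewrite x4 // -exprS addrA addxx // add0r.
Qed.

Lemma Q_inv (A : 'M[F4]_3) : inQ A ->
  exists B, [/\ inQ B, A *m B = 1%:M & B *m A = 1%:M].
Proof.
move=> /inQP [a [b [c [h ->]]]]; exists (ginv a b c); split.
- by apply/inQP; do 3 eexists; split; last reflexivity; exact: Qc_inv.
- exact: ginvP.
- apply: (mulmx1C (ginvP h)).
Qed.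

Lemma Q_frob f r (A : 'M[F4]_3) : inQ A -> inQ (frobmx f r A).
Proof.
move=> /inQP [a [b [c [[a0 h] ->]]]]; apply/inQP.
rewrite frobmx_gm //; do 3 eexists; split; last by [].
rewrite !(frobE card4); case: ifP => _; split => //; first by rewrite expf_neq0.
by rewrite -!sqFE -!rmorphXn -!rmorphM -rmorphD h.
Qed.

Lemma Q1 : inQ (1%:M : 'M[F4]_3).
Proof.
apply/inQP; exists 1, 0, 0; split; last by rewrite gm1.
by split; rewrite ?oner_eq0 // !expr0n /= !mulr0 addr0.
Qed.

End QM.

Section Qtriv.
Variable F4 : finFieldType.
Hypothesis card4 : #|F4| = 4%N.
Variable zeta : F4.
Hypotheses (zeta0 : zeta != 0) (zeta1 : zeta != 1).

Lemma zz : zeta ^+ 2 + zeta = 1.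
Proof. by rewrite z2 // addrAC addxx // add0r. Qed.

Lemma z4 : zeta ^+ 4 = zeta. Proof. exact: x4. Qed.

Lemma Qc_inQ (a b c : F4) : Qc a b c -> inQ (gm a b c).
Proof. by move=> h; apply/inQP; exists a, b, c. Qed.

Lemma Qc1 (b c : F4) : Qc 1 b c <-> c ^+ 2 + c = b ^+ 3.
Proof. by rewrite /Qc oner_neq0 expr1n !mul1r; split=> [[]|]. Qed.

Lemma Qa00 (a : F4) : a != 0 -> inQ (gm a 0 0).
Proof.
move=> a0; apply: Qc_inQ; split => //.
by rewrite !expr0n /= !mulr0 addr0.
Qed.

Lemma dec_gm (a b c : F4) : Qc a b c ->
  gm a b c = gm a 0 0 *m gm 1 (b / a) (c / a) /\ Qc 1 (b / a) (c / a).
Proof.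
move=> [a0 h]; split; last first.
  apply/Qc1.
  have -> : (c / a) ^+ 2 + c / a = (a * c ^+ 2 + a ^+ 2 * c) / a ^+ 3 by field.
  by rewrite h expr_div_n.
rewrite gm_mul //; congr gm; rewrite ?mulr1 ?expr0n /= ?mul0r ?addr0 //.
all: by field.
Qed.
Lemma dummy : True.
Proof.
done.
Qed.

Variable A : pzRingType.
Variable Tm : 'M[F4]_3 -> A.
Hypothesis Tm1 : Tm 1%:M = 1.
Hypothesis TmM : forall x y, inQ x -> inQ y -> Tm (x *m y) = Tm x * Tm y.
Hypothesis Tmc : Tm (gm zeta 0 0) = 1.

Let z20 : zeta ^+ 2 != 0. Proof. by rewrite expf_neq0. Qed.

Lemma cc : gm zeta 0 0 *m gm zeta 0 0 = gm (zeta ^+ 2) 0 0.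
Proof. by rewrite gm_mul // !mul0r !mulr0 !addr0 expr2. Qed.

Lemma Tmc2 : Tm (gm (zeta ^+ 2) 0 0) = 1.
Proof. by rewrite -cc TmM ?Tmc ?mul1r //; exact: Qa00. Qed.

Lemma Tconj (b c : F4) : Qc 1 b c -> Tm (gm 1 (zeta * b) c) = Tm (gm 1 b c).
Proof.
move=> h.
have e : gm 1 (zeta * b) c = gm (zeta ^+ 2) 0 0 *m gm 1 b c *m gm zeta 0 0.
  rewrite !gm_mul // !mul0r !mulr0 !add0r !addr0 !mulr1 -exprSr z3 //.
  have -> : zeta ^+ 2 * b * zeta ^+ 2 = zeta ^+ 4 * b by ring.
  have -> : zeta ^+ 2 * c * zeta = zeta ^+ 3 * c by ring.
  by rewrite expr0n /= mulr0 add0r z4 // z3 // mul1r.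
have hg := Qc_inQ h.
have hc := Qa00 zeta0; have hc2 := Qa00 z20.
rewrite e TmM //; last exact: Q_mul.
by rewrite TmM // Tmc2 Tmc mul1r mulr1.
Qed.

Let X := gm (1 : F4) 1 zeta.
Let t := Tm X.

Lemma QX : Qc 1 1 zeta. Proof. by apply/Qc1; rewrite zz expr1n. Qed.
Lemma QX2 : Qc (1 : F4) 0 1.
Proof. by apply/Qc1; rewrite expr1n addxx // expr0n. Qed.
Lemma QX3 : Qc 1 1 (zeta ^+ 2).
Proof. by apply/Qc1; rewrite x22 // addrC zz expr1n. Qed.

Ltac simpF := rewrite ?mul1r ?mulr1 ?mul0r ?mulr0 ?expr1n ?expr0n /= ?mul1r ?mulr1 ?mul0r ?mulr0 ?add0r ?addr0.

Lemma XX : X *m X = gm 1 0 1.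
Proof.
rewrite /X gm_mul //; congr gm; simpF; rewrite ?addxx //.
by rewrite addrAC addxx // add0r.
Qed.

Lemma XXX : gm 1 0 1 *m X = gm 1 1 (zeta ^+ 2).
Proof.
rewrite /X gm_mul //; congr gm; simpF => //.
by rewrite z2.
Qed.

Lemma X4 : gm 1 0 1 *m gm 1 0 1 = (1%:M : 'M[F4]_3).
Proof.
rewrite -gm1 gm_mul //; congr gm; simpF => //.
exact: addxx.
Qed.

Lemma XY : X *m gm 1 (zeta * 1) zeta = gm 1 (zeta ^+ 2) (zeta ^+ 2).
Proof.
rewrite /X gm_mul //; congr gm; simpF => //.
  by rewrite z2.
by rewrite addrAC addxx // add0r.
Qed.

Lemma Tt : t = 1.
Proof.
have hX := Qc_inQ QX; have hX2 := Qc_inQ QX2.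
have t2 : Tm (gm 1 0 1) = t ^+ 2 by rewrite -XX TmM // expr2.
have t3 : Tm (gm 1 1 (zeta ^+ 2)) = t ^+ 3.
  by rewrite -XXX TmM // t2 -exprSr.
have t4 : t ^+ 4 = 1 by rewrite -Tm1 -X4 TmM // t2 -exprD.
have tY : Tm (gm 1 (zeta * 1) zeta) = t by rewrite Tconj //; exact: QX.
have QY : Qc 1 (zeta * 1) zeta by apply/Qc1; rewrite mulr1 z3 // zz.
have e : gm 1 (zeta ^+ 2) (zeta ^+ 2) = gm 1 (zeta * (zeta * 1)) (zeta ^+ 2).
  by rewrite mulr1 expr2.
have Q' : Qc 1 (zeta * 1) (zeta ^+ 2).
  by apply/Qc1; rewrite mulr1 x22 // z3 // addrC zz.
have t23 : t ^+ 2 = t ^+ 3.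
  rewrite -t3 -(Tconj QX3) -(Tconj Q') -e -XY TmM //; last exact: Qc_inQ.
  by rewrite tY expr2.
have -> : t = t * t ^+ 4 by rewrite t4 mulr1.
by rewrite -exprS -[5%N]/(3 + 2)%N exprD -t23 -exprD.
Qed.


Lemma T101 : Tm (gm 1 0 1) = 1.
Proof. by rewrite -XX TmM; [rewrite -/t Tt mulr1 | exact: Qc_inQ QX..]. Qed.

Lemma Tb1 (g : F4) : g ^+ 2 + g = 1 -> Tm (gm 1 1 g) = 1.
Proof.
case: (enumF card4 zeta0 zeta1 g) => -> h.
- by move: h; rewrite expr0n addr0 => /eqP; rewrite eq_sym oner_eq0.
- by move: h; rewrite expr1n addxx // => /eqP; rewrite eq_sym oner_eq0.
- exact: Tt.
- rewrite -XXX TmM; [|exact: Qc_inQ QX2| exact: Qc_inQ QX].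
  by rewrite T101 -/t Tt mulr1.
Qed.

Lemma TQ8 (b g : F4) : Qc 1 b g -> Tm (gm 1 b g) = 1.
Proof.
move=> /Qc1 h.
case: (enumF card4 zeta0 zeta1 b) => eb; rewrite eb in h *.
- case: (enumF card4 zeta0 zeta1 g) => eg; rewrite eg in h *.
  + by rewrite gm1.
  + exact: T101.
  + by move: h; rewrite zz expr0n => /eqP; rewrite oner_eq0.
  + by move: h; rewrite x22 // addrC zz expr0n => /eqP; rewrite oner_eq0.
- by apply: Tb1; rewrite h expr1n.
- have q1 : Qc 1 1 g by apply/Qc1; rewrite h z3 // expr1n.
  by rewrite -[zeta]mulr1 Tconj // Tb1 //; move/Qc1: q1; rewrite expr1n.
- have q1 : Qc 1 1 g by apply/Qc1; rewrite h -exprM mulnC exprM z3 // !expr1n.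
  have q2 : Qc 1 (zeta * 1) g by apply/Qc1; rewrite h mulr1 -exprM mulnC exprM z3 // expr1n.
  rewrite expr2 -[X in zeta * X]mulr1 Tconj // Tconj //.
  by apply: Tb1; move/Qc1: q1; rewrite expr1n.
Qed.

Lemma Qtriv (x : 'M[F4]_3) : inQ x -> Tm x = 1.
Proof.
move=> /inQP [a [b [c [[a0 h] ->]]]].
have [e q] := dec_gm (conj a0 h).
rewrite e TmM; [| exact: Qa00 | exact: Qc_inQ q].
rewrite TQ8 // mulr1.
case: (enumF card4 zeta0 zeta1 a) a0 => -> a0.
- by rewrite eqxx in a0.
- by rewrite gm1.
- exact: Tmc.
- exact: Tmc2.
Qed.

End Qtriv.

Section M22.
Variable R : fieldType.

Lemma l01 : lift ord0 ord0 = 1 :> 'I_2. Proof. exact: val_inj. Qed.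

Lemma det22 (A : 'M[R]_2) : \det A = A 0 0 * A 1 1 - A 0 1 * A 1 0.
Proof.
rewrite (expand_det_row _ 0) !big_ord_recl big_ord0 addr0 /cofactor !det_mx11 !mxE.
rewrite /= expr0 expr1 !mul1r mulN1r mulrN.
by congr (_ * A _ _ - A _ _ * A _ _); apply: val_inj.
Qed.

Lemma tr22 (A : 'M[R]_2) : \tr A = A 0 0 + A 1 1.
Proof. by rewrite /mxtrace !big_ord_recl big_ord0 addr0 l01. Qed.

Lemma mul22 (A B : 'M[R]_2) i j : (A *m B) i j = A i 0 * B 0 j + A i 1 * B 1 j.
Proof. by rewrite !mxE !big_ord_recl big_ord0 addr0 l01. Qed.

End M22.
Section M22b.
Variable R : fieldType.
Lemma ord2 (i : 'I_2) : i = 0 \/ i = 1.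
Proof.
case: i => [[|[|k]] Hk]; [left|right|by []]; exact: val_inj.
Qed.

Lemma eq22 (A B : 'M[R]_2) : A 0 0 = B 0 0 -> A 0 1 = B 0 1 -> A 1 0 = B 1 0 ->
  A 1 1 = B 1 1 -> A = B.
Proof.
move=> h1 h2 h3 h4; apply/matrixP => i j.
by case: (ord2 i) => ->; case: (ord2 j) => ->.
Qed.
End M22b.

Section M22c.
Variable R : fieldType.
Lemma CH22 (A : 'M[R]_2) : A *m A = \tr A *: A - \det A *: 1%:M.
Proof.
apply: eq22; rewrite !mul22 !mxE /= tr22 det22 /=.
all: ring.
Qed.

Lemma det_cube (A : 'M[R]_2) : (3%:R : R) != 0 ->
  A *m A *m A = 1%:M -> \tr A = -1 -> \det A = 1.
Proof.
move=> h3 hA htr.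
have e : A *m A *m A = (1 - \det A) *: A + \det A *: 1%:M.
  rewrite CH22 htr mulmxBl -!scalemxAl CH22 htr mul1mx.
  apply: eq22; rewrite !mxE /=; ring.
case: (eqVneq (1 - \det A) 0) => [/eqP|hd].
  by rewrite subr_eq0 eq_sym => /eqP.
have hA1 : A = 1%:M.
  move: e; rewrite hA => /(congr1 (fun M => M - \det A *: 1%:M)).
  rewrite addrK -{1}[1%:M]scale1r -scalerBl => /(congr1 (fun M => (1 - \det A)^-1 *: M)).
  by rewrite !scalerA mulVf // !scale1r => <-.
move: htr; rewrite hA1 mxtrace1 => h.
have : (3%:R : R) = 0 by rewrite -[3%N]/(2 + 1)%N natrD h addNr.
by move/eqP; rewrite (negbTE h3).
Qed.

Lemma sq22 (A : 'M[R]_2) (k : R) : A *m A = k%:M ->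
  \det A = - k \/ A = (A 0 0)%:M.
Proof.
move=> h.
have e i j : (A *m A) i j = (k%:M : 'M[R]_2) i j by rewrite h.
have e00 := e 0 0; have e01 := e 0 1; have e10 := e 1 0; have e11 := e 1 1.
rewrite !mul22 !mxE /= ?mulr1n ?mulr0n in e00 e01 e10 e11.
case: (eqVneq (A 0 0 + A 1 1) 0) => hs.
  left; rewrite det22 -e00.
  have -> : A 1 1 = - A 0 0 by apply/eqP; rewrite -addr_eq0 addrC hs.
  ring.
right.
have hb : A 0 1 = 0.
  have : A 0 1 * (A 0 0 + A 1 1) = 0 by rewrite -e01; ring.
  by move/eqP; rewrite mulf_eq0 (negbTE hs) orbF => /eqP.
have hc : A 1 0 = 0.
  have : A 1 0 * (A 0 0 + A 1 1) = 0 by rewrite -e10; ring.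
  by move/eqP; rewrite mulf_eq0 (negbTE hs) orbF => /eqP.
have hd : A 1 1 = A 0 0.
  have : (A 1 1 - A 0 0) * (A 0 0 + A 1 1) = 0.
    rewrite hb hc mulr0 ?add0r ?addr0 in e00 e11.
    transitivity (A 1 1 * A 1 1 - A 0 0 * A 0 0); first ring.
    by rewrite e00 e11 subrr.
  by move/eqP; rewrite mulf_eq0 (negbTE hs) orbF subr_eq0 => /eqP.
by apply: eq22; rewrite !mxE /= ?mulr1n ?mulr0n.
Qed.
End M22c.

Lemma Epow (R : fieldType) (E : int -> R) : E 0 = 1 ->
  (forall m n, E (m + n) = E m * E n) -> forall n, E n = E 1 ^ n.
Proof.
move=> E0 ED.
have Ek : forall k : nat, E k = E 1 ^+ k.
  elim=> [|k IH]; first by rewrite E0 expr0.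
  by rewrite -addn1 PoszD ED IH addn1 exprSr.
case=> k; first exact: Ek.
have h : E (Negz k) * E (k.+1)%N = 1.
  by rewrite -ED NegzE addNr E0.
rewrite Ek in h.
have u : E 1 ^+ k.+1 != 0.
  by apply/eqP => h0; move: h; rewrite h0 mulr0 => /eqP; rewrite eq_sym oner_eq0.
by rewrite -[LHS]mulr1 -(mulfV u) mulrA h mul1r.
Qed.

Lemma three_neq0 (R : closedFieldType) : [pchar R] =i pred0 -> (3%:R : R) != 0.
Proof. by move=> c0; rewrite ((pcharf0P R).1 c0). Qed.

Lemma ccc (F4 : finFieldType) (card4 : #|F4| = 4%N) (zeta : F4) :
  zeta != 0 -> zeta != 1 ->
  gm zeta 0 0 *m gm zeta 0 0 *m gm zeta 0 0 = 1%:M.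
Proof.
move=> z0 z1; rewrite cc // gm_mul // -gm1 !mul0r !mulr0 !addr0.
by rewrite -exprSr z3.
Qed.

Lemma even_case (R : closedFieldType) (char0 : [pchar R] =i pred0)
  (F4 : finFieldType) (card4 : #|F4| = 4%N) (f : nat)
  (zeta : F4) (zeta0 : zeta != 0) (zeta1 : zeta != 1)
  (phi : 'M[F4]_3 -> R) (s : R) (s2 : s ^+ 2 = -2) :
  ~~ odd f ->
  forall rho : 'M[F4]_3 * int -> 'M[R]_2,
    is_tau_q_even f phi s rho ->
    forall g : 'M[F4]_3 * int, inG g -> \det (rho g) = (2 ^ f)%:R ^ (- g.2).
Proof.
move=> fe rho [[rho1 rhoM] [tau [[[tau1 tauM] _ _ trc] [P [Pu Peq]]]] rhos].
have hc : inQ (gm zeta 0 0) by apply: Qa00.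
have hc2 : inQ (gm zeta 0 0 *m gm zeta 0 0) by apply: Q_mul.
have Dtau : forall h, inQ h -> \det (tau h) = 1.
  apply: (Qtriv card4 zeta0 zeta1 (Tm := fun h => \det (tau h))).
  - by rewrite /= tau1 det1.
  - by move=> x y hx hy; rewrite /= tauM // det_mulmx.
  - apply: det_cube; first exact: three_neq0.
      by rewrite -!tauM // ccc // tau1.
    exact: trc.
case=> h n /= hh.
have hG1 : forall m : int, inG (1%:M : 'M[F4]_3, m) by move=> m; exact: Q1.
rewrite -(gmul_dec card4 f h n) rhoM //.
rewrite det_mulmx Peq // !det_mulmx Dtau // mulr1 -det_mulmx mulVmx // det1 mul1r.
pose E (m : int) := \det (rho (1%:M, m)).
have -> : \det (rho (1%:M, n)) = E n by [].
rewrite (@Epow _ E).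
- rewrite /E -gm1 rhos det_scalar.
  have -> : (s ^ (- f%:Z))^+2 = ((2 ^ f)%:R)^-1.
    rewrite -exprz_inv; change ((s^-1 ^+ f) ^+ 2 = ((2 ^ f)%:R)^-1).
    rewrite -exprM exprVn mulnC exprM s2.
    by rewrite -mulN1r exprMn -signr_odd (negbTE fe) expr0 mul1r natrX.
  by rewrite exprz_inv.
- by rewrite /E -[(1%:M, 0)]/(gone F4) rho1 det1.
- by move=> m m'; rewrite /E -det_mulmx -rhoM // gmul1n.
Qed.

Section Odd.
Variable R : closedFieldType.
Hypothesis char0 : [pchar R] =i pred0.
Variable F4 : finFieldType.
Hypothesis card4 : #|F4| = 4%N.
Variable f : nat.
Hypothesis fodd : odd f.
Variable zeta : F4.
Hypotheses (zeta0 : zeta != 0) (zeta1 : zeta != 1).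
Variable phi1 : 'M[F4]_3 * int -> R.
Hypothesis phi1_char : is_character (inC zeta) (gmul f) phi1.
Variable Psi : ('M[F4]_3 * int -> R) -> ('M[F4]_3 * int -> R).
Hypothesis Psi_eqv : forall g v, inG g -> inInd f (inC zeta) phi1 v ->
  Psi (gact f g v) = gact f g (Psi v).
Variable b : 'I_2 -> 'M[F4]_3 * int -> R.
Hypothesis Hb : is_ker_basis f zeta phi1 Psi b.

Definition Kp (v : 'M[F4]_3 * int -> R) :=
  inInd f (inC zeta) phi1 v /\ Psi v = (fun _ => 0).

Lemma gmulG (x y : 'M[F4]_3 * int) : inG x -> inG y -> inG (gmul f x y).
Proof. by move=> hx hy; rewrite /inG /=; apply: Q_mul => //; apply: Q_frob. Qed.

Lemma gmul_notG (g x : 'M[F4]_3 * int) : inG g -> ~ inG x -> ~ inG (gmul f x g).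
Proof.
move=> hg hx hxg; apply: hx; rewrite /inG.
have hF : inQ (frobmx f x.2 g.1) by apply: Q_frob.
have [B [hB e1 _]] := Q_inv card4 hF.
have -> : x.1 = x.1 *m frobmx f x.2 g.1 *m B by rewrite -mulmxA e1 mulmx1.
exact: Q_mul.
Qed.

Lemma Kp_gact (g : 'M[F4]_3 * int) v : inG g -> Kp v -> Kp (gact f g v).
Proof.
move=> hg [[h0 h1] hP]; split; [split|].
- by move=> x hx; rewrite /gact h0 //; apply: gmul_notG.
- move=> h x hh hx; rewrite /gact gmul_assoc // h1 //; last exact: gmulG.
- by rewrite Psi_eqv // hP.
Qed.

Definition AM (g : 'M[F4]_3 * int) (M : 'M[R]_2) := is_action_matrix f b g M.

Lemma AM_uniq g M M' : AM g M -> AM g M' -> M = M'.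
Proof.
case: Hb => _ ind _ h h'; apply/matrixP => i j.
have e : (fun y => \sum_i0 (M i0 j - M' i0 j) * b i0 y) = (fun _ => 0).
  apply: functional_extensionality => y.
  have := congr1 (fun F => F y) (h j); have := congr1 (fun F => F y) (h' j).
  move=> /= e1 e2.
  under eq_bigr do rewrite mulrBl.
  by rewrite sumrB -e1 -e2 subrr.
by have := ind _ e i; move/eqP; rewrite subr_eq0 => /eqP.
Qed.

Lemma AM_ex (g : 'M[F4]_3 * int) : inG g -> exists M, AM g M.
Proof.
move=> hg; case: Hb => hK _ span.
have [c0 e0] := span _ (Kp_gact hg (hK 0)).
have [c1 e1] := span _ (Kp_gact hg (hK 1)).
exists (\matrix_(i, j) (if j == 0 then c0 i else c1 i)) => j.
case: (ord2 j) => ->; [rewrite e0 | rewrite e1];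
  apply: functional_extensionality => y; apply: eq_bigr => i _; by rewrite mxE.
Qed.

Lemma AM_mul (g h : 'M[F4]_3 * int) M N : AM g M -> AM h N ->
  AM (gmul f g h) (M *m N).
Proof.
move=> hM hN j; apply: functional_extensionality => y.
rewrite /gact -gmul_assoc //.
have := congr1 (fun F => F (gmul f y g)) (hN j); rewrite /gact /= => ->.
have hMi : forall i, b i (gmul f y g) = \sum_k M k i * b k y.
  by move=> i; exact: (congr1 (fun F => F y) (hM i)).
under eq_bigr => i _ do rewrite hMi.
under [RHS]eq_bigr => i _ do rewrite mxE mulr_suml.
rewrite exchange_big /=; apply: eq_bigr => i _; rewrite mulr_sumr.
by apply: eq_bigr => k _; rewrite mulrA [N _ _ * _]mulrC.
Qed.

Lemma AM_one : AM (gone F4) 1%:M.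
Proof.
move=> j; apply: functional_extensionality => y.
rewrite /gact gmul1 // !big_ord_recl big_ord0 addr0 !mxE l01.
by case: (ord2 j) => -> /=; rewrite ?mul1r ?mul0r ?addr0 ?add0r.
Qed.

Definition T (g : 'M[F4]_3 * int) : 'M[R]_2 := epsilon (inhabits 0) (AM g).

Lemma T_AM g : inG g -> AM g (T g).
Proof. by move=> hg; apply: epsilon_spec; apply: AM_ex. Qed.

Lemma T_mul g h : inG g -> inG h -> T (gmul f g h) = T g *m T h.
Proof.
move=> hg hh; apply: (@AM_uniq (gmul f g h)); first by apply: T_AM; apply: gmulG.
by apply: AM_mul; apply: T_AM.
Qed.

Lemma T_one : T (gone F4) = 1%:M.
Proof. by apply: (@AM_uniq (gone F4)); [apply: T_AM; exact: Q1 | exact: AM_one]. Qed.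

Local Notation q := ((2 ^ f)%:R : R).
Variable eta : R.
Hypothesis phi1w : phi1 (gm 1 zeta zeta, 1) = eta / q.
Hypothesis phi1z : phi1 (gm 1 0 0, 2) = - q^-1.

Lemma q0 : q != 0.
Proof. by rewrite ((pcharf0P R).1 char0) expn_eq0. Qed.

Lemma inC12 : inC zeta (1%:M, 2).
Proof.
split; first by split; [exact: Q1 | exists 0, 0; rewrite gm1].
by exists 0%N; rewrite expr0.
Qed.

Lemma frob2 (A : 'M[F4]_3) : frobmx f 2 A = A.
Proof. by rewrite frobmxE // oddM /= andbF. Qed.

Lemma central12 (y : 'M[F4]_3 * int) : gmul f y (1%:M, 2) = gmul f (1%:M, 2) y.
Proof.
by case: y => A n; rewrite /gmul /= frobmx1 // mulmx1 mul1mx frob2 addrC.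
Qed.

Lemma sum_scal (k : R) j y : \sum_i (k%:M : 'M[R]_2) i j * b i y = k * b j y.
Proof.
rewrite !big_ord_recl big_ord0 addr0 !mxE l01.
by case: (ord2 j) => -> /=; rewrite ?mulr1n ?mulr0n ?mul0r ?addr0 ?add0r.
Qed.

Lemma T12 : T (1%:M, 2) = (- q^-1)%:M.
Proof.
have h12 : inG ((1%:M : 'M[F4]_3), 2) by exact: Q1.
apply: (@AM_uniq (1%:M, 2)); first exact: T_AM.
move=> j; apply: functional_extensionality => y; rewrite sum_scal /gact.
case: Hb => hK _ _; have [[b0 bC] _] := hK j.
case: (classic (inG y)) => hy.
  rewrite central12 bC //; last exact: inC12.
  by rewrite -[(1%:M, 2)]/((1%:M : 'M[F4]_3), 2) -gm1 phi1z.
by rewrite !b0 ?mulr0 //; apply: gmul_notG.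
Qed.

Local Notation one n := (@pair 'M[F4]_3 int 1%:M n).
Local Notation A1 := (T (one 1)).
Local Notation cm := (gm zeta 0 0).
Local Notation cm2 := (gm (zeta ^+ 2) 0 0).

Lemma G1 (n : int) : inG ((1%:M : 'M[F4]_3), n). Proof. exact: Q1. Qed.

Lemma A1sq : A1 *m A1 = (- q^-1)%:M.
Proof. by rewrite -T_mul; [rewrite gmul1n // -T12 | exact: G1..]. Qed.

Lemma A1unit : \det A1 != 0.
Proof.
apply/eqP => h.
have : \det (A1 *m T (one (-1))) = 1.
  rewrite -T_mul; [|exact: G1..].
  by rewrite gmul1n // addrN -[one 0]/(gone F4) T_one det1.
by rewrite det_mulmx h mul0r => /eqP; rewrite eq_sym oner_eq0.
Qed.

Lemma hcm : inQ cm. Proof. exact: Qa00. Qed.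
Lemma hcm2 : inQ cm2. Proof. by apply: Qa00; rewrite expf_neq0. Qed.

Lemma crel : A1 *m T (cm, 0) = T (cm2, 0) *m A1.
Proof.
rewrite -!T_mul; try exact: G1; try exact: hcm; try exact: hcm2.
congr T; rewrite /gmul /= frobmx1 // mul1mx mulmx1 add0r addr0.
rewrite frobmx_gm // !frobE // muln1 fodd /= expr0n /=.
done.
Qed.

Lemma Tc2 : T (cm2, 0) = T (cm, 0) *m T (cm, 0).
Proof. by rewrite -T_mul; [rewrite gmul0 // cc | exact: hcm..]. Qed.

Lemma Tcc : T (cm, 0) *m T (cm2, 0) = 1%:M.
Proof.
rewrite -T_mul; [|exact: hcm|exact: hcm2].
by rewrite gmul0 // -cc // mulmxA ccc // -T_one.
Qed.

Lemma T0M (x y : 'M[F4]_3) : inQ x -> inQ y -> T (x *m y, 0) = T (x, 0) *m T (y, 0).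
Proof. by move=> hx hy; rewrite -T_mul // gmul0. Qed.

Lemma T01 : T ((1%:M : 'M[F4]_3), 0) = 1%:M.
Proof. exact: T_one. Qed.

Lemma Dtriv (h : 'M[F4]_3) : inQ h -> \det (T (h, 0)) = 1.
Proof.
apply: (Qtriv card4 zeta0 zeta1 (Tm := fun h => \det (T (h, 0)))).
- by rewrite /= T01 det1.
- by move=> x y hx hy; rewrite /= T0M // det_mulmx.
- rewrite /=.
  have e := congr1 determinant crel; rewrite !det_mulmx Tc2 det_mulmx in e.
  set d := \det (T (cm, 0)) in e *.
  have dn0 : d != 0.
    by apply/eqP => h0; have := congr1 determinant Tcc; rewrite det_mulmx -/d h0 mul0r det1 => /eqP; rewrite eq_sym oner_eq0.
  have := A1unit => hA.
  apply: (mulfI dn0); rewrite mulr1; apply: (mulIf hA).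
  by rewrite -e mulrC.
Qed.

Variable s : R.
Hypothesis s2 : s ^+ 2 = -2.
Hypothesis heta : eta ^+ 2 + s ^+ f.+1 * eta + q = 0.

Local Notation Xm := (gm (1 : F4) 1 zeta).

Lemma powX k : let M := Xm ^+ k in
  [\/ M = gm 1 0 0, M = Xm, M = gm 1 0 1 | M = gm 1 1 (zeta ^+ 2)].
Proof.
elim: k => [|k IH] /=; first by rewrite expr0 gm1; constructor.
rewrite exprSr -mulmxE.
case: IH => ->.
- by rewrite gm1 mul1mx; constructor.
- by rewrite XX //; constructor.
- by rewrite XXX //; constructor.
- by rewrite -XXX // -mulmxA XX // X4 // -gm1; constructor.
Qed.

Lemma notC4 : ~ inC4 zeta (gm 1 zeta zeta).
Proof.
case=> k e; have := congr1 (fun M : 'M[F4]_3 => M 0 1) e.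
case: (powX k) => -> /=; rewrite !mxE /= => h.
- by move: zeta0; rewrite h eqxx.
- by move: zeta1; rewrite h eqxx.
- by move: zeta0; rewrite h eqxx.
- by move: zeta1; rewrite h eqxx.
Qed.

Lemma inCX : inC zeta (Xm, 0).
Proof.
split; first by split; [exact: Qc_inQ (QX card4 zeta0 zeta1) | exists 1, zeta].
by exists 1%N; rewrite expr1.
Qed.

Lemma inCw : inC zeta (gm 1 zeta zeta, 1).
Proof.
split; last exact: notC4.
split; last by exists zeta, zeta.
by apply: Qc_inQ; apply/Qc1; rewrite zz // z3.
Qed.

Lemma ww : gmul f (gm 1 zeta zeta, 1) (gm 1 zeta zeta, 1) = (Xm, 2).
Proof.
rewrite /gmul /= frobmx_gm // !frobE // muln1 fodd /= gm_mul //; congr (_, _).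
congr gm; rewrite ?expr1n ?mul1r ?mulr1 //.
- exact: zz.
- by rewrite x22 // -expr2 addxx // add0r.
Qed.

Lemma s0 : s != 0.
Proof.
apply/eqP => h; move: s2; rewrite h expr0n /= => /eqP.
by rewrite eq_sym oppr_eq0 ((pcharf0P R).1 char0).
Qed.

Lemma phiX : phi1 (Xm, 0) != 1.
Proof.
apply/eqP => h1.
case: phi1_char => _ pM.
have e : phi1 (gm 1 zeta zeta, 1) * phi1 (gm 1 zeta zeta, 1) = - q^-1.
  rewrite -pM; [|exact: inCw..].
  rewrite ww -(gmul_dec card4 f) pM; [|exact: inCX|exact: inC12].
  by rewrite h1 mul1r -[one 2]/(@pair 'M[F4]_3 int 1%:M 2) -gm1 phi1z.
rewrite phi1w in e.
have q0' := q0.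
have e2 : eta ^+ 2 = - q.
  have -> : eta ^+ 2 = (eta / q * (eta / q)) * q ^+ 2 by field.
  by rewrite e; field.
move: heta; rewrite e2 addrAC addNr add0r => /eqP.
rewrite mulf_eq0 expf_eq0 (negbTE s0) andbF /= => /eqP h0.
by move: e2; rewrite h0 expr0n /= => /eqP; rewrite eq_sym oppr_eq0 (negbTE q0').
Qed.

Lemma Tq_triv : T (cm, 0) = 1%:M -> forall h, inQ h -> T (h, 0) = 1%:M.
Proof.
move=> Tc.
apply: (Qtriv card4 zeta0 zeta1 (A := 'M[R]_2) (Tm := fun h => T (h, 0))).
- by rewrite /= T01.
- by move=> x y hx hy; rewrite /= T0M // mulmxE.
- exact: Tc.
Qed.

Lemma no_triv : ~ (forall h, inQ h -> T (h, 0) = 1%:M).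
Proof.
move=> Tt; case: Hb => hK ind _.
have [[bz bC] _] := hK 0.
have hb : forall y, b 0 y = 0.
  move=> y; case: (classic (inG y)) => hy; last exact: bz.
  case: y hy => h n hy.
  have hh : inQ h by [].
  have [B [hB e1 _]] := Q_inv card4 hh.
  set u := frobmx f n (B *m Xm *m h).
  have hu : inQ u.
    apply: Q_frob => //; apply: Q_mul => //; apply: Q_mul => //.
    exact: Qc_inQ (QX card4 zeta0 zeta1).
  have E1 : gmul f (h, n) (u, 0) = gmul f (Xm, 0) (h, n).
    rewrite /gmul /= frobmxK // addr0 frobmx0 // add0r; congr (_, _).
    by rewrite !mulmxA e1 mul1mx.
  have E2 : b 0 (gmul f (h, n) (u, 0)) = b 0 (h, n).
    have := congr1 (fun F => F (h, n)) (T_AM (g := (u, 0)) hu 0).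
    by rewrite /gact /= => ->; rewrite Tt // sum_scal mul1r.
  have E3 := bC _ _ inCX hy.
  rewrite E1 E3 in E2.
  have : (phi1 (Xm, 0) - 1) * b 0 (h, n) = 0 by rewrite mulrBl E2 mul1r subrr.
  by move/eqP; rewrite mulf_eq0 subr_eq0 (negbTE phiX) /= => /eqP.
have := ind (fun i => (i == 0)%:R).
have -> : (fun y => \sum_i (i == 0)%:R * b i y) = (fun _ => 0).
  apply: functional_extensionality => y.
  by rewrite !big_ord_recl big_ord0 /= hb l01 /= mul0r mulr0 !addr0.
by move=> /(_ erefl 0) /eqP; rewrite eqxx /= oner_eq0.
Qed.

Lemma nonscalar (a : R) : A1 <> a%:M.
Proof.
move=> hA.
have a0 : a != 0.
  by apply/eqP => h; have := A1unit; rewrite hA h det_scalar expr0n /= eqxx.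
have e := crel; rewrite hA mul_scalar_mx mul_mx_scalar in e.
have e' : T (cm, 0) = T (cm2, 0).
  by have := congr1 (fun M => a^-1 *: M) e; rewrite !scalerA mulVf // !scale1r.
have Tc : T (cm, 0) = 1%:M.
  have h1 := Tcc; rewrite -e' in h1.
  by rewrite {1}e' Tc2 h1.
exact: no_triv (Tq_triv Tc).
Qed.

Lemma dA1 : \det A1 = q^-1.
Proof.
case: (sq22 A1sq) => [->|h]; first by rewrite opprK.
by case: (nonscalar h).
Qed.

Lemma odd_main (g : 'M[F4]_3 * int) M : inG g -> AM g M -> \det M = q ^ (- g.2).
Proof.
move=> hg hM.
have -> : M = T g by apply: (@AM_uniq g) => //; exact: T_AM.
case: g hg {hM} => h n hh /=.
rewrite -(gmul_dec card4 f h n) T_mul //; last exact: G1.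
rewrite det_mulmx Dtriv // mul1r.
pose E (m : int) := \det (T (one m)).
have -> : \det (T (1%:M, n)) = E n by [].
rewrite (@Epow _ E).
- by rewrite /E dA1 exprz_inv.
- by rewrite /E -[one 0]/(gone F4) T_one det1.
- by move=> m m'; rewrite /E -det_mulmx -T_mul ?gmul1n //; exact: G1.
Qed.

End Odd.

Theorem lemma3p4
  (R : closedFieldType) (char0 : [pchar R] =i pred0)
  (F4 : finFieldType) (card4 : #|F4| = 4%N)
  (f : nat) (f_ge1 : (1 <= f)%N)
  (zeta : F4) (zeta0 : zeta != 0) (zeta1 : zeta != 1)
  (phi : 'M[F4]_3 -> R) (phi_faithful : faithful_char_C4 zeta phi)
  (s : R) (s2 : s ^+ 2 = -2) :
  let q : R := (2 ^ f)%:R in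
  (* f even *)
  (~~ odd f ->
     forall rho : 'M[F4]_3 * int -> 'M[R]_2,
       is_tau_q_even f phi s rho ->
       forall g : 'M[F4]_3 * int, inG g -> \det (rho g) = q ^ (- g.2)) /\
  (* f odd *)
  (odd f ->
     forall (eta : R), eta ^+ 2 + s ^+ f.+1 * eta + q = 0 ->
     forall phi1 phi2 : 'M[F4]_3 * int -> R,
       is_phi1 f zeta eta phi1 -> is_phi2 f phi s phi2 ->
     forall Psi, is_Psi f zeta phi1 phi2 Psi ->
     forall b, is_ker_basis f zeta phi1 Psi b ->
     forall (g : 'M[F4]_3 * int) (M : 'M[R]_2), inG g ->
       is_action_matrix f b g M -> \det M = q ^ (- g.2)).
Proof.
move=> q; split.
  exact: (even_case char0 card4 zeta0 zeta1 s2).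
move=> fo eta heta phi1 phi2 [phi1c phi1w phi1z] _ Psi [_ _ Peqv _] b Hb g M hg hM.
exact: (odd_main char0 card4 fo zeta0 zeta1 phi1c Peqv Hb phi1w phi1z s2 heta hg hM).
Qed.
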